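(* Let $s$ be a positive integer and $G$ an undirected graph. There exists an $(s,s)$-dissolution for $G$ if and only if $G$ has a perfect matching.
   Context: For $V'\subseteq V(G)$ let $Z(V',G):=\{(x,y)\mid x\in V',\ y\in V(G)\setminus V',\ \{x,y\}\in E(G)\}$. For positive integers $s,\Delta_s$, an $(s,\Delta_s)$-dissolution for $G$ is a pair $(D,z)$ with $D\subset V(G)$ and $z\colon Z(D,G)\to\{0,\dots,s\}$ such that (a) each $v'\in D$ satisfies $\sum_{(v',v)\in Z(D,G)} z(v',v)=s$, and (b) each $v\in V(G)\setminus D$ satisfies $\sum_{(v',v)\in Z(D,G)} z(v',v)=\Delta_s$. *)

(* Defs.v *)
From mathcomp Require Import all_boot.
Set Implicit Arguments. Unset Strict Implicit. Unset Printing Implicit Defensive.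

(* A finite undirected (simple) graph: vertex type T : finType and an
   adjacency relation e : rel T, assumed symmetric and irreflexive in the
   theorem.  V(G) = T, E(G) = { {x,y} | e x y }. *)

Definition inZ (T : finType) (e : rel T) (D : {set T}) (x y : T) : bool :=
  [&& x \in D, y \notin D & e x y].

(* (s, Ds)-dissolution (D, z).  z is represented as a total function
   T -> T -> nat; only its values on Z(D,G) matter, and those must lie in
   {0,...,s}. *)
Definition is_dissolution (T : finType) (e : rel T) (s Ds : nat)
    (D : {set T}) (z : T -> T -> nat) : Prop :=
  [/\ (forall x y, inZ e D x y -> z x y <= s),
      (forall v', v' \in D -> \sum_(v | inZ e D v' v) z v' v = s) &
      (forall v, v \notin D -> \sum_(v' | inZ e D v' v) z v' v = Ds)].

Definition has_dissolution (T : finType) (e : rel T) (s Ds : nat) : Prop :=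
  exists (D : {set T}) (z : T -> T -> nat), is_dissolution e s Ds D z.

Definition is_perfect_matching (T : finType) (e : rel T) (M : {set {set T}}) : Prop :=
  (forall E, E \in M -> exists x y, [/\ x != y, e x y & E = [set x; y]]) /\
  (forall v : T, #|[set E in M | v \in E]| = 1).

Definition has_perfect_matching (T : finType) (e : rel T) : Prop :=
  exists M : {set {set T}}, is_perfect_matching e M.

(* Main.v *)
Require Import Defs.
From mathcomp Require Import all_boot.
From mathcomp Require Import zify.
Set Implicit Arguments. Unset Strict Implicit. Unset Printing Implicit Defensive.

Definition nbh (T : finType) (r : rel T) (S : {set T}) : {set T} :=
  [set y | [exists x in S, r x y]].

Lemma nbhP (T : finType) (r : rel T) (S : {set T}) y :
  reflect (exists2 x, x \in S & r x y) (y \in nbh r S).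
Proof. rewrite inE; exact: exists_inP. Qed.

Lemma hall_ind (T : finType) n : forall (r : rel T) (A : {set T}), #|A| <= n ->
  (forall S : {set T}, S \subset A -> #|S| <= #|nbh r S|) ->
  exists f : T -> T, {in A &, injective f} /\ (forall x, x \in A -> r x (f x)).
Proof.
elim: n => [|n IH] r A hA hc.
  move: hA; rewrite leqn0 => /eqP/cards0_eq ->.
  by exists id; split=> [x y|x]; rewrite inE.
case: (boolP [exists S : {set T}, [&& S \subset A, S != set0, S != A & #|nbh r S| <= #|S|]]).
- move=> /existsP [S0 /and4P [sS0 nS0 neS0 hS0]].
  have ltS0 : #|S0| < #|A| by rewrite proper_card // properEneq neS0 sS0.
  have [f1 [inj1 r1]] := IH r S0 (ltac:(lia))
     (fun S sS => hc S (subset_trans sS sS0)).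
  pose r2 := [rel x y | r x y && (y \notin nbh r S0)].
  have hA' : #|A :\: S0| <= n.
    rewrite cardsD (setIidPr sS0).
    have : 0 < #|S0| by rewrite card_gt0.
    lia.
  have hc2 : forall S : {set T}, S \subset A :\: S0 -> #|S| <= #|nbh r2 S|.
    move=> S sS.
    have dis : S :&: S0 = set0.
      apply/setP=> x; rewrite !inE; apply/negbTE; apply/negP=> /andP [xS xS0].
      by move: (subsetP sS x xS); rewrite !inE xS0.
    have sU : S :|: S0 \subset A.
      rewrite subUset sS0 andbT; apply: subset_trans sS _; exact: subsetDl.
    have h1 := hc _ sU.
    have h2 := cardsUI S S0; rewrite dis cards0 in h2.
    have h3 : #|nbh r (S :|: S0)| <= #|nbh r S :|: nbh r S0|.
      apply: subset_leq_card; apply/subsetP=> y /nbhP [x]; rewrite !inE => /orP [xS|xS0] rxy.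
        by apply/orP; left; apply/exists_inP; exists x.
      by apply/orP; right; apply/exists_inP; exists x.
    have h4 := cardsUI (nbh r S) (nbh r S0).
    have h5 := cardsD (nbh r S) (nbh r S0).
    have h6 : #|nbh r S :\: nbh r S0| <= #|nbh r2 S|.
      apply: subset_leq_card; apply/subsetP=> y; rewrite inE => /andP [yn /nbhP [x xS rxy]].
      by apply/nbhP; exists x => //=; rewrite rxy yn.
    lia.
  have [f2 [inj2 r2f]] := IH r2 _ hA' hc2.
  exists (fun x => if x \in S0 then f1 x else f2 x); split.
    move=> x y xA yA /=.
    case: (boolP (x \in S0)) => xS0; case: (boolP (y \in S0)) => yS0.
    + exact: inj1.
    + move=> E; have : f2 y \notin nbh r S0.
        by have /andP [] := r2f y (ltac:(by rewrite inE yS0)).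
      by rewrite -E; move/negP; case; apply/nbhP; exists x => //; apply: r1.
    + move=> E; have : f2 x \notin nbh r S0.
        by have /andP [] := r2f x (ltac:(by rewrite inE xS0)).
      by rewrite E; move/negP; case; apply/nbhP; exists y => //; apply: r1.
    + by apply: inj2; rewrite inE ?xS0 ?yS0.
  move=> x xA; case: (boolP (x \in S0)) => xS0; first exact: r1.
  by have /andP [] := r2f x (ltac:(by rewrite inE xS0)).
- move=> /existsPn hno.
  case: (set_0Vmem A) => [A0 | [a aA]].
    by rewrite A0; exists id; split=> [x y|x]; rewrite inE.
  have : 0 < #|nbh r [set a]|.
    by have := hc [set a] (ltac:(by rewrite sub1set)); rewrite cards1.
  move=> /card_gt0P [b /nbhP [a' ]]; rewrite inE => /eqP -> rab.
  pose r2 := [rel x y | r x y && (y != b)].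
  have hA' : #|A :\ a| <= n.
    by have := cardsD1 a A; rewrite aA; lia.
  have hc2 : forall S : {set T}, S \subset A :\ a -> #|S| <= #|nbh r2 S|.
    move=> S sS.
    case: (set_0Vmem S) => [-> | [x xS]]; first by rewrite cards0.
    have aS : a \notin S.
      by apply/negP => /(subsetP sS); rewrite !inE eqxx.
    have := hno S; rewrite !negb_and.
    have -> : S \subset A by apply: subset_trans sS _; exact: subsetDl.
    have -> : S != set0 by apply/set0Pn; exists x.
    have -> : S != A by apply/eqP => E; move: aS; rewrite E aA.
    rewrite /= -ltnNge => hlt.
    have h1 := cardsD1 b (nbh r S).
    have h2 : #|nbh r S :\ b| <= #|nbh r2 S|.
      apply: subset_leq_card; apply/subsetP=> y; rewrite !inE => /andP [yb].
      by move=> /exists_inP [z zS rzy]; apply/exists_inP; exists z => //=; rewrite rzy yb.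
    move: h1; case: (b \in nbh r S) => /=; lia.
  have [f2 [inj2 r2f]] := IH r2 _ hA' hc2.
  exists (fun x => if x == a then b else f2 x); split.
    move=> x y xA yA /=.
    case: (eqVneq x a) => [->|xa]; case: (eqVneq y a) => [->|ya] //.
    + move=> E; have /andP [_] := r2f y (ltac:(by rewrite !inE ya)).
      by rewrite -E eqxx.
    + move=> E; have /andP [_] := r2f x (ltac:(by rewrite !inE xa)).
      by rewrite E eqxx.
    + by apply: inj2; rewrite !inE ?xa ?ya.
  move=> x xA; case: (eqVneq x a) => [->|xa] //.
  by have /andP [] := r2f x (ltac:(by rewrite !inE xa)).
Qed.

Lemma diss_to_pm (T : finType) (e : rel T) (s : nat)
  (e_sym : symmetric e) (s_pos : 0 < s) :
  has_dissolution e s s -> has_perfect_matching e.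
Proof.
move=> [D [z [ha hb hc]]].
pose w x y := if inZ e D x y then z x y else 0.
have row : forall x, x \in D -> \sum_y w x y = s.
  by move=> x xD; rewrite -(hb x xD) [RHS]big_mkcond.
have colD : forall y, y \notin D -> \sum_(x in D) w x y = s.
  move=> y yD; rewrite -(hc y yD) [RHS]big_mkcond [LHS]big_mkcond.
  apply: eq_bigr => x _; rewrite /w /inZ; case: (boolP (x \in D)) => //=.
have col0 : forall y, y \in D -> \sum_(x in D) w x y = 0.
  by move=> y yD; apply: big1 => x _; rewrite /w /inZ yD /= andbF.
pose r := [rel x y | inZ e D x y && (0 < z x y)].
have subsum : forall (S : {set T}) F, S \subset D ->
    \sum_(x in S) F x <= \sum_(x in D) F x.
  move=> S F sS; rewrite [X in X <= _]big_mkcond [X in _ <= X]big_mkcond.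
  apply: leq_sum => x _; case: (boolP (x \in S)) => xS //.
  by rewrite (subsetP sS x xS).
have hallc : forall S : {set T}, S \subset D -> #|S| <= #|nbh r S|.
  move=> S sS.
  have eq1 : s * #|S| = \sum_(x in S) \sum_(y in nbh r S) w x y.
    rewrite mulnC -sum_nat_const; apply: eq_bigr => x xS.
    rewrite -(row x (subsetP sS x xS)) [LHS](bigID (mem (nbh r S))) /=. rewrite addnC.
    rewrite [X in X + _ = _]big1 ?add0n //.
    move=> y /= yN; rewrite /w; case: ifP => // hz.
    case: (posnP (z x y)) => // zp; move: yN.
    by move/negP; case; apply/nbhP; exists x => //=; rewrite hz zp.
  have le1 : \sum_(x in S) \sum_(y in nbh r S) w x y <= s * #|nbh r S|.
    rewrite exchange_big mulnC -sum_nat_const; apply: leq_sum => y yN.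
    have yD : y \notin D.
      by move: yN => /nbhP [x _ /andP [/and3P [] _ ->]].
    by rewrite -(colD y yD); apply: subsum.
  by rewrite -(leq_pmul2l s_pos) eq1.
have [f [finj fr]] := hall_ind (leqnn #|D|) hallc.
have fD : forall x, x \in D -> f x \notin D.
  by move=> x /fr /andP [/and3P []].
have fe : forall x, x \in D -> e x (f x).
  by move=> x /fr /andP [/and3P []].
have cardD : #|D| = #|~: D|.
  apply/eqP; rewrite -(eqn_pmul2l s_pos); apply/eqP.
  transitivity (\sum_y \sum_(x in D) w x y).
    rewrite exchange_big mulnC -sum_nat_const; apply: eq_bigr => x xD.
    by rewrite row.
  rewrite (bigID (mem D)) /= big1 ?add0n => [|y /= yD]; last by rewrite col0.
  rewrite mulnC -sum_nat_const; apply: eq_big => [y|y /= yD]; first by rewrite inE.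
  by rewrite colD.
have surj : forall v, v \notin D -> exists2 x, x \in D & v = f x.
  have sub : f @: D \subset ~: D.
    by apply/subsetP => y /imsetP [x xD ->]; rewrite inE fD.
  have hc' : #|f @: D| = #|~: D| by rewrite card_in_imset.
  move=> v vD; have := (subset_cardP hc' sub) v; rewrite inE vD => /imsetP.
  by move=> [x xD ->]; exists x.
exists ((fun x => [set x; f x]) @: D); split.
  move=> E /imsetP [x xD ->]; exists x, (f x); split => //; last exact: fe.
  by apply/eqP => Ex; move: (fD x xD); rewrite -Ex xD.
move=> v.
have key : forall x0, x0 \in D -> v \in [set x0; f x0] ->
    (forall x, x \in D -> v \in [set x; f x] -> x = x0) ->
    #|[set E in (fun x => [set x; f x]) @: D | v \in E]| = 1.
  move=> x0 x0D vE0 huniq.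
  have -> : [set E in (fun x => [set x; f x]) @: D | v \in E] = [set [set x0; f x0]].
    apply/setP => E; rewrite !inE; apply/andP/eqP.
      by move=> [/imsetP [x xD ->] vE]; rewrite (huniq x xD vE).
    by move=> ->; split => //; apply/imsetP; exists x0.
  by rewrite cards1.
case: (boolP (v \in D)) => vD.
  apply: (key v vD); first by rewrite !inE eqxx.
  move=> x xD; rewrite !inE => /orP [/eqP -> //|/eqP vf].
  by move: (fD x xD); rewrite -vf vD.
have [x0 x0D vx0] := surj v vD.
apply: (key x0 x0D); first by rewrite !inE vx0 eqxx orbT.
move=> x xD; rewrite !inE => /orP [/eqP vx|/eqP vf].
  by move: vD; rewrite vx xD.
by apply: finj => //; rewrite -vf.
Qed.

Lemma pm_to_diss (T : finType) (e : rel T) (s : nat)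
  (e_sym : symmetric e) :
  has_perfect_matching e -> has_dissolution e s s.
Proof.
move=> [M [hM1 hM2]].
have Muniq : forall v E1 E2, E1 \in M -> E2 \in M -> v \in E1 -> v \in E2 -> E1 = E2.
  move=> v E1 E2 E1M E2M vE1 vE2.
  have /cards1P [E0 hE0] : #|[set E in M | v \in E]| == 1 by rewrite hM2.
  have : E1 \in [set E0] by rewrite -hE0 inE E1M vE1.
  have : E2 \in [set E0] by rewrite -hE0 inE E2M vE2.
  by rewrite !inE => /eqP -> /eqP ->.
pose pm v y := ([set v; y] \in M) && (v != y).
have pm_ex : forall v, exists y, pm v y.
  move=> v; have /cards1P [E0 hE0] : #|[set E in M | v \in E]| == 1 by rewrite hM2.
  have : E0 \in [set E in M | v \in E] by rewrite hE0 set11.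
  rewrite inE => /andP [E0M vE0].
  have [a [b [ab eab E0ab]]] := hM1 E0 E0M.
  move: vE0; rewrite E0ab !inE => /orP [/eqP va|/eqP vb].
    by exists b; rewrite /pm va -E0ab E0M ab.
  by exists a; rewrite /pm vb setUC -E0ab E0M eq_sym ab.
have pm_sym : forall v y, pm v y -> pm y v.
  by move=> v y; rewrite /pm setUC eq_sym.
have pm_uniq : forall v y y', pm v y -> pm v y' -> y = y'.
  move=> v y y' /andP [h1 n1] /andP [h2 n2].
  have E := Muniq v _ _ h1 h2 (setU11 _ _) (setU11 _ _).
  have : y \in [set v; y'] by rewrite -E !inE eqxx orbT.
  by rewrite !inE eq_sym (negbTE n1) /= => /eqP.
have pm_e : forall v y, pm v y -> e v y.
  move=> v y /andP [h n].
  have [a [b [ab eab E]]] := hM1 _ h.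
  have vE : v \in [set a; b] by rewrite -E !inE eqxx.
  have yE : y \in [set a; b] by rewrite -E !inE eqxx orbT.
  move: n vE yE; rewrite !inE.
  case: (eqVneq v a) => [->|va] /=; case: (eqVneq y a) => [->|ya] //=;
    rewrite ?eqxx ?orbF ?orbT //=.
  - by move=> _ _ /eqP ->.
  - by move=> _ /eqP -> _; rewrite e_sym.
  - by move=> vy /eqP vb /eqP yb; move: vy; rewrite vb yb eqxx.
pose p v := odflt v [pick y | pm v y].
have pP : forall v, pm v (p v).
  move=> v; rewrite /p; case: pickP => [y //|h].
  by have [y hy] := pm_ex v; move: (h y); rewrite hy.
have pp : forall v, p (p v) = v.
  by move=> v; apply: (pm_uniq (p v)) => //; apply: pm_sym.
have pne : forall v, v != p v by move=> v; have /andP [] := pP v.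
pose D := [set v | enum_rank v < enum_rank (p v)].
exists D, (fun x y => if y == p x then s else 0); split.
- by move=> x y _; case: ifP.
- move=> v vD.
  have hZ : inZ e D v (p v).
    apply/and3P; split => //; last exact: pm_e.
    by move: vD; rewrite !inE pp -leqNgt => /ltnW.
  rewrite (bigD1 (p v)) //= eqxx big1 ?addn0 //.
  by move=> y /andP [_ yne]; rewrite (negbTE yne).
- move=> v vD.
  have hZ : inZ e D (p v) v.
    apply/and3P; split => //; last by rewrite e_sym; apply: pm_e.
    move: vD; rewrite !inE pp -leqNgt ltn_neqAle => ->; rewrite andbT.
    apply/negP => /eqP h; have h2 := enum_rank_inj (val_inj h); by move: (pne v); rewrite h2 eqxx.
  rewrite (bigD1 (p v)) //= pp eqxx big1 ?addn0 //.
  move=> y /andP [_ yne]; case: (eqVneq v (p y)) => // vy.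
  by move: yne; rewrite vy pp eqxx.
Qed.

Theorem corollary3 (T : finType) (e : rel T) (s : nat)
  (e_sym : symmetric e) (e_irr : irreflexive e) (s_pos : 0 < s) :
  has_dissolution e s s <-> has_perfect_matching e.
Proof.
split; [exact: diss_to_pm | exact: pm_to_diss].
Qed.
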